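(* If $d$ and $e$ are degree sequences with the same sum such that $d\succeq e$, then $\Delta_{m(d)}(d)\le \Delta_{m(e)}(e)$.
   Context: Degree sequences (of finite simple graphs, terms may be $0$) are listed in nonincreasing order; sequences of different lengths are compared after padding with zeros. $m(d)=\max\{i : d_i\ge i-1\}$. For integers $k\ge 0$, $\Delta_k(d)=k(k-1)+\sum_{i>k}\min\{k,d_i\}-\sum_{i\le k}d_i$. Majorization (dominance order): for degree sequences $d,e$ with the same sum, $d\succeq e$ means $\sum_{i\le k}d_i\ge\sum_{i\le k}e_i$ for all $k$. *)

(* Defs.v *)
From mathcomp Require Import all_boot all_order all_algebra.
Set Implicit Arguments. Unset Strict Implicit. Unset Printing Implicit Defensive.
Import GRing.Theory Num.Theory.

(* A sequence d : seq nat stands for d_1, d_2, ..., d_(size d) followed by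
   infinitely many zeros; d_i (1-based) is nth 0 d i.-1. *)
Definition dterm (d : seq nat) (i : nat) : nat := nth 0 d i.-1.

Definition simple_graph (n : nat) (g : rel 'I_n) : Prop :=
  (forall x y, g x y = g y x) /\ (forall x, g x x = false).

Definition vdeg (n : nat) (g : rel 'I_n) (x : 'I_n) : nat :=
  #|[set y | g x y]|.

Definition degree_sequence (d : seq nat) : Prop :=
  sorted geq d /\
  exists g : rel 'I_(size d),
    simple_graph g /\ forall x : 'I_(size d), vdeg g x = nth 0 d x.

(* m(d) = max { i >= 1 : d_i >= i - 1 } (with zero padding; i = 1 always
   qualifies, and no i > size d + 1 can qualify). *)
Definition mdeg (d : seq nat) : nat :=
  \max_(1 <= i < (size d).+2 | i.-1 <= dterm d i) i.

Definition Delta (k : nat) (d : seq nat) : int :=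
  ((k * k.-1)%:Z + (\sum_(k.+1 <= i < (size d).+1) minn k (dterm d i))%:Z
   - (\sum_(1 <= i < k.+1) dterm d i)%:Z)%R.

Definition majorizes (d e : seq nat) : Prop :=
  sumn d = sumn e /\
  forall k : nat, \sum_(1 <= i < k.+1) dterm e i <= \sum_(1 <= i < k.+1) dterm d i.

(* Main.v *)
Require Import Defs.
From mathcomp Require Import all_boot all_order all_algebra.
From mathcomp Require Import zify.
Import GRing.Theory Num.Theory.

Lemma sorted_nth_mono (d : seq nat) i j :
  sorted geq d -> i <= j -> nth 0 d j <= nth 0 d i.
Proof.
move=> sd ij.
case: (ltnP j (size d)) => hj; last by rewrite nth_default.
have gtr : transitive geq by move=> a b c /= h1 h2; exact: leq_trans h2 h1.
have := @sorted_leq_nth nat geq gtr (fun x => leqnn x) 0 d sd i j.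
by apply => //; rewrite inE; lia.
Qed.

Lemma dterm_mono d i j : sorted geq d -> i <= j -> dterm d j <= dterm d i.
Proof. by move=> sd ij; apply: sorted_nth_mono => //; lia. Qed.

Definition P (d : seq nat) k := \sum_(1 <= i < k.+1) dterm d i.

Lemma PS d k : P d k.+1 = P d k + dterm d k.+1.
Proof. by rewrite /P big_nat_recr. Qed.

Lemma mdeg_le d : mdeg d <= (size d).+1.
Proof.
rewrite /mdeg; apply/bigmax_leqP_seq => i; rewrite mem_index_iota; lia.
Qed.

Lemma mdeg_ge d i : 1 <= i < (size d).+2 -> i.-1 <= dterm d i -> i <= mdeg d.
Proof.
move=> hi hp; rewrite /mdeg.
by apply: (@leq_bigmax_seq nat (index_iota 1 (size d).+2) (fun i => i.-1 <= dterm d i) (fun i => i) i) => //; rewrite mem_index_iota.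
Qed.

Lemma mdeg_prop d : 1 <= mdeg d /\ (mdeg d).-1 <= dterm d (mdeg d).
Proof.
have h1 : 1 <= mdeg d by apply: mdeg_ge => //; lia.
split => //.
have : (mdeg d == 0) || ((mdeg d).-1 <= dterm d (mdeg d)).
  rewrite /mdeg big_nat_cond.
  apply: (big_ind (fun x => (x == 0) || (x.-1 <= dterm d x))) => //.
    by move=> x y hx hy; rewrite /maxn; case: ifP.
  by move=> i /andP [_ ->]; rewrite orbT.
by case/orP => // /eqP h; rewrite h in h1.
Qed.

Lemma d_big d k : sorted geq d -> 1 <= k <= mdeg d -> k.-1 <= dterm d k.
Proof.
move=> sd /andP [h1 h2].
have [_ hm] := mdeg_prop d.
have := @dterm_mono d _ _ sd h2. lia.
Qed.

Lemma d_small d k : mdeg d < k -> dterm d k < k.-1.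
Proof.
move=> hk.
have [h1 _] := mdeg_prop d.
case: (ltnP k (size d).+2) => hs.
  rewrite ltnNge; apply/negP => h.
  have := mdeg_ge d k (ltac:(lia)) h. lia.
rewrite /dterm nth_default; lia.
Qed.

Lemma h_up d a b : a <= b -> (forall i, a < i <= b -> dterm d i < i.-1) ->
  a * a.-1 + 2 * P d b <= b * b.-1 + 2 * P d a.
Proof.
move=> ab; elim: b ab => [|b IH] ab H.
  by have -> : a = 0 by lia.
case: (ltnP a b.+1) => hab; last by have -> : a = b.+1 by lia.
have := IH (ltnSE hab) (fun i hi => H i (ltac:(lia))).
have := H b.+1 (ltac:(lia)).
rewrite PS. nia.
Qed.

Lemma h_down d a b : a <= b -> (forall i, a < i <= b -> i.-1 <= dterm d i) ->
  b * b.-1 + 2 * P d a <= a * a.-1 + 2 * P d b.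
Proof.
move=> ab; elim: b ab => [|b IH] ab H.
  by have -> : a = 0 by lia.
case: (ltnP a b.+1) => hab; last by have -> : a = b.+1 by lia.
have := IH (ltnSE hab) (fun i hi => H i (ltac:(lia))).
have := H b.+1 (ltac:(lia)).
rewrite PS. nia.
Qed.

Lemma h_min d k : sorted geq d ->
  mdeg d * (mdeg d).-1 + 2 * P d k <= k * k.-1 + 2 * P d (mdeg d).
Proof.
move=> sd.
case: (leqP (mdeg d) k) => hk.
  apply: h_up => // i hi; apply: d_small; lia.
apply: h_down; first lia.
move=> i hi; apply: d_big => //; lia.
Qed.

Lemma sumn_P d : sumn d = \sum_(1 <= i < (size d).+2) dterm d i.
Proof.
rewrite big_nat_recr //= {2}/dterm nth_default // addn0.
rewrite big_add1 /= sumnE (big_nth 0) /dterm.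
by [].
Qed.

Lemma tail_eq d : sorted geq d ->
  \sum_((mdeg d).+1 <= i < (size d).+1) minn (mdeg d) (dterm d i)
  + P d (mdeg d) = sumn d.
Proof.
move=> sd.
set m := mdeg d.
have hmle : m <= (size d).+1 by apply: mdeg_le.
have [hm1 _] := mdeg_prop d.
rewrite (@eq_big_nat _ _ _ _ _ _ (dterm d)); last first.
  move=> i /andP [hi _].
  have h1 := @dterm_mono d _ _ sd hi.
  have h2 := d_small d m.+1 (ltnSn m).
  apply/minn_idPr. rewrite /= in h2. lia.
have e2 : \sum_(m.+1 <= i < (size d).+1) dterm d i = \sum_(m.+1 <= i < (size d).+2) dterm d i.
  case: (ltnP m (size d).+1) => hh.
    rewrite [in RHS]big_nat_recr //=.
    by rewrite /dterm /= nth_default // addn0.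
  have -> : m = (size d).+1 by apply/eqP; rewrite eqn_leq hmle hh.
  by rewrite !big_geq.
rewrite e2 addnC /P -big_cat_nat //.
by rewrite sumn_P.
Qed.

Theorem lemma15 (d e : seq nat) :
  degree_sequence d -> degree_sequence e ->
  sumn d = sumn e -> majorizes d e ->
  (Delta (mdeg d) d <= Delta (mdeg e) e)%R.
Proof.
move=> [sd _] [se _] hs [_ hmaj].
have td := tail_eq d sd. have te := tail_eq e se.
have A := h_min d (mdeg e) sd.
have B := hmaj (mdeg e).
rewrite /Delta. move: td te A B. rewrite /P.
move: (mdeg d * (mdeg d).-1) (mdeg e * (mdeg e).-1) => X Y.
move: (\sum_(_ <= i < _) minn (mdeg d) _) (\sum_(_ <= i < _) minn (mdeg e) _) => Td Te.
move: (\sum_(1 <= i < (mdeg d).+1) dterm d i) (\sum_(1 <= i < (mdeg e).+1) dterm d i)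
  (\sum_(1 <= i < (mdeg e).+1) dterm e i) => p1 p2 p3.
lia.
Qed.
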